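(* Under the setting and hypotheses of the outer-loop iteration below (with $\epsilon\in(0,1/3)$), fix a target radius $R_k>R_\infty$ and a stopping threshold $$C_{stop}\ge\|\Sigma_g\|_{op}+\delta_\Sigma+(\delta_\mu+R_k)^2+\delta_T .$$ Consider the stopped procedure: at outer iteration $s$, stop and output $\bar w^{[s]}$ if $\gamma(\bar w^{[s]};\hat\mu^{[s]})\le C_{stop}$; otherwise set $\hat\mu^{[s+1]}=\sum_n\bar w^{[s]}_ng_n$ and continue. Then: (1) if $e^{[s]}\le R_k$ then $\gamma(\bar w^{[s]};\hat\mu^{[s]})\le C_{stop}$; consequently the procedure stops at some iteration $s\le s_{\max}:=1+\Big\lceil\frac{\log\big((e^{[1]}-R_\infty)_+/(R_k-R_\infty)\big)}{\log(1/\alpha_\epsilon)}\Big\rceil$ (with $s_{\max}:=1$ if $e^{[1]}\le R_\infty$); (2) if the procedure stops at iteration $s$, then $\big\|\sum_{n=1}^N\bar w^{[s]}_ng_n-\mu_g\big\|_2\le\delta_\mu+\alpha_\epsilon\sqrt{C_{stop}}$.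
   Context: Fix $N\ge1$, $p\ge2$, $\epsilon\in(0,1/3)$ and vectors $g_1,\dots,g_N\in\mathbb R^p$ with $\nu=\max_{i,j}\|g_i-g_j\|_2^2>0$; fix $T\ge4\max\{\log\frac1{1-\epsilon},\log p\}$ and $\delta_T=4\nu(\sqrt{\log(1/(1-\epsilon))/T}+\sqrt{\log p/T})$. For an index set $I$ and $\epsilon'\in[0,1)$, $\Delta_{I,\epsilon'}=\{w\in\mathbb R^I:\sum_{n\in I}w_n=1,0\le w_n\le\frac1{(1-\epsilon')|I|}\}$; $\Delta_{N,\epsilon}=\Delta_{[N],\epsilon}$. Density matrices $\mathfrak D_p=\{\rho\succeq0\text{ symmetric},\mathrm{Tr}\rho=1\}$. For $\hat\mu\in\mathbb R^p$: $S(w;\hat\mu)=\sum_nw_n(g_n-\hat\mu)(g_n-\hat\mu)^\top$, $\gamma(w;\hat\mu)=\|S(w;\hat\mu)\|_{op}$, $\mathrm{OPT}(\hat\mu)=\min_{w\in\Delta_{N,\epsilon}}\max_{\rho\in\mathfrak D_p}\mathrm{Tr}(S(w;\hat\mu)\rho)$. Inlier stability condition: a partition $[N]=I_{in}\sqcup I_{out}$ with $|I_{out}|\le\epsilon N$, $\mu_g\in\mathbb R^p$, symmetric PSD $\Sigma_g$, constants $\delta_\mu,\delta_\Sigma\ge0$ with, for every $w\in\Delta_{I_{in},\epsilon/(1-\epsilon)}$, $\|\sum_{n\in I_{in}}w_n(g_n-\mu_g)\|_2\le\delta_\mu$ and $\sum_{n\in I_{in}}w_n(g_n-\mu_g)(g_n-\mu_g)^\top\preceq\Sigma_g+\delta_\Sigma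 I$. Outer-loop iteration: $\hat\mu^{[1]}\in\operatorname{conv}\{g_n\}$; at iteration $s$ a weight vector $\bar w^{[s]}\in\Delta_{N,\epsilon}$ is produced with $\gamma(\bar w^{[s]};\hat\mu^{[s]})\le\mathrm{OPT}(\hat\mu^{[s]})+\delta_T$ (e.g. by MW–MMW rounds with uniform start and step sizes $\eta_w=\frac1\nu\sqrt{\log(1/(1-\epsilon))/T}$, $\eta_\rho=\frac1\nu\sqrt{\log p/T}$), and if not stopped $\hat\mu^{[s+1]}=\sum_n\bar w^{[s]}_ng_n$. Set $e^{[s]}=\|\hat\mu^{[s]}-\mu_g\|_2$, $\alpha_\epsilon=\sqrt{\epsilon/(1-2\epsilon)}$, $R_{\epsilon,T}=(1+\alpha_\epsilon)\delta_\mu+\alpha_\epsilon\sqrt{\|\Sigma_g\|_{op}+\delta_\Sigma+\delta_T}$, $R_\infty=R_{\epsilon,T}/(1-\alpha_\epsilon)$. *)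

(* Defs.v *)
From HB Require Import structures.
From mathcomp Require Import all_boot all_order all_algebra.
From mathcomp Require Import all_classical all_reals exp.
Set Implicit Arguments. Unset Strict Implicit. Unset Printing Implicit Defensive.
Import Order.TTheory GRing.Theory Num.Theory.
Local Open Scope ring_scope.
Local Open Scope classical_set_scope.

Section Defs.
Variable R : realType.

Definition norm2 (p : nat) (x : 'cV[R]_p) : R := Num.sqrt (\sum_i (x i 0) ^+ 2).

Definition opnorm (p : nat) (A : 'M[R]_p) : R :=
  sup [set norm2 (A *m x) | x in [set x : 'cV[R]_p | norm2 x <= 1]].

Definition symmetric (p : nat) (A : 'M[R]_p) : Prop := A^T = A.
Definition psd (p : nat) (A : 'M[R]_p) : Prop :=
  symmetric A /\ forall x : 'cV[R]_p, 0 <= (x^T *m A *m x) 0 0.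
Definition loewner_le (p : nat) (A B : 'M[R]_p) : Prop :=
  forall x : 'cV[R]_p, (x^T *m A *m x) 0 0 <= (x^T *m B *m x) 0 0.

Definition density (p : nat) : set 'M[R]_p :=
  [set rho | psd rho /\ \tr rho = 1].

(* Delta_{I,eps'} : weights indexed by 'I_N, only the entries in I matter *)
Definition DeltaI (N : nat) (I : {set 'I_N}) (eps' : R) : set ('I_N -> R) :=
  [set w | \sum_(n in I) w n = 1 /\
           forall n, n \in I -> 0 <= w n /\ w n <= 1 / ((1 - eps') * #|I|%:R)].
Definition DeltaN (N : nat) (eps : R) : set ('I_N -> R) := DeltaI [set: 'I_N] eps.

Definition wmean (N p : nat) (g : 'I_N -> 'cV[R]_p) (w : 'I_N -> R) : 'cV[R]_p :=
  \sum_n w n *: g n.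

Definition Smat (N p : nat) (g : 'I_N -> 'cV[R]_p) (w : 'I_N -> R) (mu : 'cV[R]_p)
  : 'M[R]_p := \sum_n w n *: ((g n - mu) *m (g n - mu)^T).

Definition gammaf (N p : nat) (g : 'I_N -> 'cV[R]_p) (w : 'I_N -> R) (mu : 'cV[R]_p) : R :=
  opnorm (Smat g w mu).

Definition OPT (N p : nat) (eps : R) (g : 'I_N -> 'cV[R]_p) (mu : 'cV[R]_p) : R :=
  inf [set sup [set \tr (Smat g w mu *m rho) | rho in @density p] | w in DeltaI [set: 'I_N] eps].

Definition nu (N p : nat) (g : 'I_N -> 'cV[R]_p) : R :=
  \big[Order.max/0]_(i < N) \big[Order.max/0]_(j < N) norm2 (g i - g j) ^+ 2.

Definition deltaT (N p : nat) (g : 'I_N -> 'cV[R]_p) (eps : R) (T : nat) : R :=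
  4 * nu g * (Num.sqrt (ln (1 / (1 - eps)) / T%:R) + Num.sqrt (ln p%:R / T%:R)).

Definition in_conv (N p : nat) (g : 'I_N -> 'cV[R]_p) (mu : 'cV[R]_p) : Prop :=
  exists lam : 'I_N -> R, (forall n, 0 <= lam n) /\ \sum_n lam n = 1 /\ mu = wmean g lam.

Definition inlier_stable (N p : nat) (eps : R) (g : 'I_N -> 'cV[R]_p)
  (Iin : {set 'I_N}) (mug : 'cV[R]_p) (Sigg : 'M[R]_p) (dmu dSig : R) : Prop :=
  #|~: Iin|%:R <= eps * N%:R /\ psd Sigg /\ 0 <= dmu /\ 0 <= dSig /\
  forall w, DeltaI Iin (eps / (1 - eps)) w ->
    norm2 (\sum_(n in Iin) w n *: (g n - mug)) <= dmu /\
    loewner_le (\sum_(n in Iin) w n *: ((g n - mug) *m (g n - mug)^T))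
               (Sigg + dSig%:M).

Definition alpha_eps (eps : R) : R := Num.sqrt (eps / (1 - 2 * eps)).

Definition R_epsT (eps dmu sigop dSig dT : R) : R :=
  (1 + alpha_eps eps) * dmu + alpha_eps eps * Num.sqrt (sigop + dSig + dT).

Definition R_inf (eps dmu sigop dSig dT : R) : R :=
  R_epsT eps dmu sigop dSig dT / (1 - alpha_eps eps).

(* s_max; the ceiling is clipped at 0 so that s_max >= 1 *)
Definition s_max (eps e1 Rinf Rk : R) : int :=
  if e1 <= Rinf then 1%Z
  else (1 + Num.max 0 (Num.ceil (ln ((e1 - Rinf) / (Rk - Rinf)) / ln (1 / alpha_eps eps))))%R.

End Defs.
Arguments DeltaN {R} N eps.
Arguments density {R} p.

(* Main.v *)
Require Import Defs.
From HB Require Import structures.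
From mathcomp Require Import all_boot all_order all_algebra.
From mathcomp Require Import all_classical all_reals exp.
From mathcomp.algebra_tactics Require Import ring lra.
From mathcomp Require Import zify.
Import Order.TTheory GRing.Theory Num.Theory.
Local Open Scope ring_scope.

Module Helpers.
Set Implicit Arguments. Unset Strict Implicit. Unset Printing Implicit Defensive.

Section L1.
Variable R : realType.

Lemma cs_sum (I : finType) (P : pred I) (f h : I -> R) :
  (\sum_(i | P i) f i * h i) ^+ 2 <=
  (\sum_(i | P i) f i ^+ 2) * (\sum_(i | P i) h i ^+ 2).
Proof.
set A := \sum_(i | P i) f i ^+ 2; set B := \sum_(i | P i) h i ^+ 2.
set C := \sum_(i | P i) f i * h i.
have H0 : 0 <= \sum_(i | P i) \sum_(j | P j) (f i * h j - f j * h i) ^+ 2.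
  by apply: sumr_ge0 => i _; apply: sumr_ge0 => j _; exact: sqr_ge0.
have E : \sum_(i | P i) \sum_(j | P j) (f i * h j - f j * h i) ^+ 2
   = \sum_(i | P i) \sum_(j | P j) (f i ^+ 2 * h j ^+ 2 + h i ^+ 2 * f j ^+ 2
        - 2 * ((f i * h i) * (f j * h j))).
  by apply: eq_bigr => i _; apply: eq_bigr => j _; ring.
have F1 : \sum_(i | P i) \sum_(j | P j) f i ^+ 2 * h j ^+ 2 = A * B.
  by rewrite mulr_suml; apply: eq_bigr => i _; rewrite mulr_sumr.
have F2 : \sum_(i | P i) \sum_(j | P j) h i ^+ 2 * f j ^+ 2 = B * A.
  by rewrite mulr_suml; apply: eq_bigr => i _; rewrite mulr_sumr.
have F3 : \sum_(i | P i) \sum_(j | P j) 2 * ((f i * h i) * (f j * h j)) = 2 * (C * C).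
  rewrite mulr_suml mulr_sumr; apply: eq_bigr => i _; rewrite !mulr_sumr.
  by apply: eq_bigr => j _.
move: E; under [X in _ = X]eq_bigr => i _ do rewrite sumrB big_split /=.
rewrite sumrB big_split /= F1 F2 F3 => E.
move: H0; rewrite E => H0; rewrite expr2; lra.
Qed.

Definition dot (p : nat) (x y : 'cV[R]_p) : R := \sum_i x i 0 * y i 0.

Lemma dot_ge0 p (x : 'cV[R]_p) : 0 <= dot x x.
Proof. by apply: sumr_ge0 => i _; rewrite -expr2 sqr_ge0. Qed.

Lemma norm2_dot p (x : 'cV[R]_p) : norm2 x = Num.sqrt (dot x x).
Proof. by rewrite /norm2 /dot; congr Num.sqrt; apply: eq_bigr => i _; rewrite expr2. Qed.

Lemma norm2_ge0 p (x : 'cV[R]_p) : 0 <= norm2 x.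
Proof. exact: sqrtr_ge0. Qed.

Lemma norm2_sq p (x : 'cV[R]_p) : norm2 x ^+ 2 = dot x x.
Proof. by rewrite norm2_dot sqr_sqrtr // dot_ge0. Qed.

Lemma cs_dot p (x y : 'cV[R]_p) : dot x y ^+ 2 <= dot x x * dot y y.
Proof.
rewrite /dot.
have := cs_sum predT (fun i => x i 0) (fun i => y i 0).
have E1 : forall z : 'cV[R]_p, \sum_i z i 0 ^+ 2 = \sum_i z i 0 * z i 0.
  by move=> z; apply: eq_bigr => i _; rewrite expr2.
by rewrite /= !E1.
Qed.

Lemma cs_norm p (x y : 'cV[R]_p) : `|dot x y| <= norm2 x * norm2 y.
Proof.
rewrite -sqrtr_sqr !norm2_dot -sqrtrM ?dot_ge0 //.
by rewrite ler_wsqrtr // cs_dot.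
Qed.

Lemma dotC p (x y : 'cV[R]_p) : dot x y = dot y x.
Proof. by apply: eq_bigr => i _; rewrite mulrC. Qed.

Lemma dotDr p (x y z : 'cV[R]_p) : dot x (y + z) = dot x y + dot x z.
Proof. by rewrite /dot -big_split; apply: eq_bigr => i _; rewrite !mxE mulrDr. Qed.

Lemma dotBr p (x y z : 'cV[R]_p) : dot x (y - z) = dot x y - dot x z.
Proof. by rewrite /dot -sumrB; apply: eq_bigr => i _; rewrite !mxE mulrDr mulrN. Qed.

Lemma dotZr p (x y : 'cV[R]_p) c : dot x (c *: y) = c * dot x y.
Proof. by rewrite /dot mulr_sumr; apply: eq_bigr => i _; rewrite !mxE; ring. Qed.

Lemma dot_sumr p (I : finType) (P : pred I) (x : 'cV[R]_p) (F : I -> 'cV[R]_p) :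
  dot x (\sum_(n | P n) F n) = \sum_(n | P n) dot x (F n).
Proof.
rewrite /dot exchange_big /=; apply: eq_bigr => i _.
by rewrite summxE mulr_sumr.
Qed.

End L1.


Section L2.
Variable R : realType.

Definition qf (p : nat) (A : 'M[R]_p) (x : 'cV[R]_p) : R :=
  \sum_i \sum_j x i 0 * A i j * x j 0.

Lemma qfE p (A : 'M[R]_p) x : (x^T *m A *m x) 0 0 = qf A x.
Proof.
rewrite /qf mxE exchange_big /=; apply: eq_bigr => k _.
rewrite mxE mulr_suml; apply: eq_bigr => j _; rewrite !mxE.
by [].
Qed.

Lemma qf_dot p (A : 'M[R]_p) x : qf A x = dot x (A *m x).
Proof.
rewrite /qf /dot; apply: eq_bigr => i _; rewrite mxE mulr_sumr.
by apply: eq_bigr => j _; rewrite mulrA.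
Qed.

Lemma qf_sum p (I : finType) (P : pred I) (F : I -> 'M[R]_p) x :
  qf (\sum_(n | P n) F n) x = \sum_(n | P n) qf (F n) x.
Proof.
rewrite /qf [RHS]exchange_big /=; apply: eq_bigr => i _.
rewrite [RHS]exchange_big /=; apply: eq_bigr => j _.
by rewrite summxE mulr_sumr mulr_suml.
Qed.

Lemma qfZ p (A : 'M[R]_p) x c : qf (c *: A) x = c * qf A x.
Proof.
rewrite /qf mulr_sumr; apply: eq_bigr => i _; rewrite mulr_sumr.
by apply: eq_bigr => j _; rewrite mxE; ring.
Qed.

Lemma qfD p (A B : 'M[R]_p) x : qf (A + B) x = qf A x + qf B x.
Proof.
rewrite /qf -big_split; apply: eq_bigr => i _; rewrite -big_split.
by apply: eq_bigr => j _; rewrite mxE mulrDr mulrDl.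
Qed.

Lemma qf_outer p (u x : 'cV[R]_p) : qf (u *m u^T) x = dot x u ^+ 2.
Proof.
rewrite /qf /dot expr2 mulr_suml; apply: eq_bigr => i _; rewrite mulr_sumr.
apply: eq_bigr => j _; rewrite mxE (big_ord1 _ (fun k => u i k * u^T k j)) !mxE.
ring.
Qed.

Lemma qf_scalar p (x : 'cV[R]_p) c : qf (c%:M) x = c * dot x x.
Proof.
rewrite /qf /dot mulr_sumr; apply: eq_bigr => i _.
rewrite (bigD1 i) //= big1 ?addr0 => [|j /negbTE ji]; last by rewrite mxE eq_sym ji mulr0n; ring.
by rewrite mxE eqxx mulr1n; ring.
Qed.

Lemma norm2_0 p : norm2 (0 : 'cV[R]_p) = 0.
Proof. by rewrite /norm2 big1 ?sqrtr0 // => i _; rewrite mxE expr2 mulr0. Qed.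

Lemma norm2Z p (x : 'cV[R]_p) c : norm2 (c *: x) = `|c| * norm2 x.
Proof.
rewrite /norm2 -sqrtr_sqr -sqrtrM ?sqr_ge0 //; congr Num.sqrt.
by rewrite mulr_sumr; apply: eq_bigr => i _; rewrite mxE exprMn.
Qed.

Lemma sqr_normr (x : R) : `|x| ^+ 2 = x ^+ 2.
Proof. exact: real_normK (num_real x). Qed.

Lemma coord_le p (x : 'cV[R]_p) i : x i 0 ^+ 2 <= dot x x.
Proof.
rewrite /dot (bigD1 i) //= -expr2 lerDl.
by apply: sumr_ge0 => j _; rewrite -expr2 sqr_ge0.
Qed.

Lemma opnorm_has_ub p (A : 'M[R]_p) :
  has_ubound [set norm2 (A *m x) | x in [set x : 'cV[R]_p | norm2 x <= 1]].
Proof.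
exists (Num.sqrt (\sum_i (\sum_j `|A i j|) ^+ 2)) => y [x /= Hx <-].
rewrite /norm2 ler_wsqrtr // ler_sum // => i _.
have Hd : dot x x <= 1 by move: Hx; rewrite norm2_dot -{1}sqrtr1 ler_sqrt // ler01.
have Hb : `|(A *m x) i 0| <= \sum_j `|A i j|.
  rewrite mxE; apply: le_trans (ler_norm_sum _ _ _) _.
  apply: ler_sum => j _; rewrite normrM.
  have := coord_le x j; rewrite -sqr_normr => Hj.
  have Hj1 : `|x j 0| <= 1.
    have := normr_ge0 (x j 0); move: Hj Hd; set t := `|x j 0|; nra.
  by rewrite ler_piMr.
rewrite -sqr_normr; have := normr_ge0 ((A *m x) i 0); move: Hb.
set a := `| _ |; set b := \sum_j _; nra.
Qed.

Lemma opnorm_ub p (A : 'M[R]_p) x : norm2 x <= 1 -> norm2 (A *m x) <= opnorm A.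
Proof.
move=> Hx; apply: (ub_le_sup (opnorm_has_ub A)); exists x => //.
Qed.

Lemma opnorm_ge0 p (A : 'M[R]_p) : 0 <= opnorm A.
Proof.
have := @opnorm_ub p A 0; rewrite mulmx0 norm2_0; apply; rewrite ler01 //.
Qed.

Lemma opnorm_quad p (A : 'M[R]_p) x : qf A x <= opnorm A * dot x x.
Proof.
rewrite qf_dot; apply: le_trans (ler_norm _) _; apply: le_trans (cs_norm _ _) _.
have r0 := norm2_ge0 x; rewrite -norm2_sq.
have [rz|rp] := eqVneq (norm2 x) 0.
  by rewrite rz mul0r expr0n /= mulr0.
have rgt : 0 < norm2 x by rewrite lt_def rp r0.
have H := @opnorm_ub p A ((norm2 x)^-1 *: x).
rewrite norm2Z -scalemxAr norm2Z ger0_norm ?invr_ge0 // mulVf // lexx in H.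
have H' : norm2 (A *m x) <= opnorm A * norm2 x.
  by rewrite -ler_pdivrMr // mulrC; apply: H.
rewrite expr2 mulrA [opnorm A * _]mulrC -mulrA.
by rewrite ler_pM2l.
Qed.

End L2.


Section L3.
Variable R : realType.
Variable p : nat.
Implicit Types (r : 'I_p -> 'I_p -> R) (x y : 'I_p -> R).

Definition bil r x y : R := \sum_i \sum_j x i * r i j * y j.
Definition trf (M : 'M[R]_p) r : R := \sum_i \sum_j M i j * r j i.
Definition delta (u : 'I_p) : 'I_p -> R := fun k => (k == u)%:R.

Lemma sum_delta u (F : 'I_p -> R) : \sum_i (i == u)%:R * F i = F u.
Proof.
rewrite (bigD1 u) //= eqxx mul1r big1 ?addr0 // => i /negbTE ->.
by rewrite mul0r.
Qed.

Lemma sum_delta_r u (F : 'I_p -> R) : \sum_i F i * (i == u)%:R = F u.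
Proof. by rewrite -(sum_delta u F); apply: eq_bigr => i _; rewrite mulrC. Qed.

Lemma bil_delta r u v : bil r (delta u) (delta v) = r u v.
Proof.
rewrite /bil /delta; under eq_bigr => i _ do under eq_bigr => j _ do rewrite -mulrA.
under eq_bigr => i _ do rewrite -mulr_sumr.
by rewrite sum_delta sum_delta_r.
Qed.

Lemma bil_lin_l r a b c t : bil r (fun k => a k + t * b k) c = bil r a c + t * bil r b c.
Proof.
rewrite /bil mulr_sumr -big_split; apply: eq_bigr => i _ /=.
rewrite mulr_sumr -big_split; apply: eq_bigr => j _ /=; ring.
Qed.

Lemma bil_lin_r r a b c t : bil r c (fun k => a k + t * b k) = bil r c a + t * bil r c b.
Proof.
rewrite /bil mulr_sumr -big_split; apply: eq_bigr => i _ /=.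
rewrite mulr_sumr -big_split; apply: eq_bigr => j _ /=; ring.
Qed.

Lemma bil_sym r x y : (forall i j, r i j = r j i) -> bil r x y = bil r y x.
Proof.
move=> Hs; rewrite /bil exchange_big /=; apply: eq_bigr => i _.
by apply: eq_bigr => j _; rewrite Hs; ring.
Qed.

Lemma quad_expand r x y t : (forall i j, r i j = r j i) ->
  bil r (fun k => x k + t * y k) (fun k => x k + t * y k)
  = bil r x x + 2 * t * bil r x y + t ^+ 2 * bil r y y.
Proof.
move=> Hs; rewrite bil_lin_l !bil_lin_r (bil_sym y x Hs); ring.
Qed.

Lemma zero_row r i j : (forall i j, r i j = r j i) -> (forall x, 0 <= bil r x x) ->
  r i i = 0 -> r i j = 0.
Proof.
move=> Hs Hp Hii; apply/eqP; apply/negPn/negP => Hne.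
pose t := - (r j j + 1) / (2 * r i j).
have := Hp (fun k => delta j k + t * delta i k).
rewrite quad_expand // !bil_delta Hii (Hs j i) mulr0 addr0.
have -> : 2 * t * r i j = - (r j j + 1).
  by rewrite /t; field.
lra.
Qed.

Lemma diag_ge0 r i : (forall x, 0 <= bil r x x) -> 0 <= r i i.
Proof. by move=> Hp; rewrite -bil_delta; apply: Hp. Qed.

Lemma trf_psd_ind (M : 'M[R]_p) : (forall x, 0 <= bil (fun i j => M i j) x x) ->
  forall n r, (forall i j, r i j = r j i) -> (forall x, 0 <= bil r x x) ->
  (#|[set k | r k k != 0%R]| <= n)%N -> 0 <= trf M r.
Proof.
move=> HM; elim=> [|n IH] r Hs Hp Hc.
  have Hz : forall i j, r i j = 0.
    move=> i j; apply: zero_row => //; apply/eqP/negPn/negP => H.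
    move: Hc; rewrite leqn0 cards_eq0 => /eqP /setP /(_ i).
    by rewrite !inE H.
  by rewrite /trf big1 // => i _; rewrite big1 // => j _; rewrite Hz mulr0.
case: (pickP (fun k => r k k != 0)) => [i Hi|Hno]; last first.
  have Hz : forall i j, r i j = 0.
    by move=> i j; apply: zero_row => //; apply/eqP/negPn; rewrite Hno.
  by rewrite /trf big1 // => i _; rewrite big1 // => j _; rewrite Hz mulr0.
have rpos : 0 < r i i by rewrite lt_def Hi diag_ge0.
pose s := Num.sqrt (r i i).
have spos : 0 < s by rewrite sqrtr_gt0.
pose v := fun k => r k i / s.
pose r' := fun k l => r k l - v k * v l.
have Hs' : forall k l, r' k l = r' l k by move=> k l; rewrite /r' Hs; ring.
have Hdec : trf M r = trf M r' + bil (fun i j => M i j) v v.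
  rewrite /trf /bil -big_split; apply: eq_bigr => k _ /=.
  rewrite -big_split; apply: eq_bigr => l _ /=; rewrite /r'; ring.
have Hp' : forall x, 0 <= bil r' x x.
  move=> x.
  pose c := \sum_k x k * r k i.
  have Hb : bil r' x x = bil r x x - c ^+ 2 / r i i.
    have -> : bil r' x x = bil r x x - (\sum_k x k * v k) ^+ 2.
      rewrite /bil expr2 mulr_suml -sumrB; apply: eq_bigr => k _.
      rewrite mulr_sumr -sumrB; apply: eq_bigr => l _; rewrite /r'; ring.
    congr (_ - _); rewrite /v /c.
    have -> : \sum_k x k * (r k i / s) = (\sum_k x k * r k i) / s.
      by rewrite mulr_suml; apply: eq_bigr => k _; rewrite mulrA.
    by rewrite expr_div_n /s sqr_sqrtr // ltW.
  have Hxy := Hp (fun k => x k + (- c / r i i) * delta i k).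
  rewrite quad_expand // bil_delta in Hxy.
  have Hc2 : bil r x (delta i) = c.
    rewrite /bil /c; apply: eq_bigr => k _.
    by rewrite /delta (sum_delta_r i (fun l => x k * r k l)).
  rewrite Hc2 in Hxy; rewrite Hb.
  have E : bil r x x + 2 * (- c / r i i) * c + (- c / r i i) ^+ 2 * r i i
         = bil r x x - c ^+ 2 / r i i.
    by field; rewrite gt_eqF.
  by rewrite -E.
have Hsub : [set k | r' k k != 0] \proper [set k | r k k != 0].
  apply/properP; split.
    apply/fintype.subsetP => k; rewrite !inE; apply: contraNneq => Hk.
    rewrite /r' /v Hk (zero_row i Hs Hp Hk) mul0r mul0r subr0 //.
  exists i; rewrite !inE ?Hi //= negbK /r' /v.
  apply/eqP; rewrite -expr2 expr_div_n /s sqr_sqrtr ?ltW // expr2 mulfK ?subrr //.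
rewrite Hdec addrC; apply: addr_ge0; first exact: HM.
apply: IH => //; by rewrite -ltnS (leq_trans (proper_card Hsub) Hc).
Qed.

Lemma trace_psd (M rho : 'M[R]_p) : (forall x : 'cV[R]_p, 0 <= qf M x) -> psd rho ->
  0 <= \tr (M *m rho).
Proof.
move=> HM [Hsym Hq].
have conv : forall (A : 'M[R]_p) x, bil (fun i j => A i j) x x = qf A (\col_k x k).
  by move=> A x; rewrite /bil /qf; apply: eq_bigr => i _; apply: eq_bigr => j _; rewrite !mxE.
have -> : \tr (M *m rho) = trf M (fun i j => rho i j).
  by rewrite /mxtrace /trf; apply: eq_bigr => i _; rewrite mxE.
apply: (@trf_psd_ind M _ #|'I_p|).
- by move=> x; rewrite conv.
- by move=> i j; rewrite -{1}Hsym mxE.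
- by move=> x; rewrite conv -qfE.
- exact: max_card.
Qed.

End L3.


Section L4gen.
Variable R : realType.

Lemma wcs (I : finType) (P : pred I) (w z : I -> R) : (forall i, 0 <= w i) ->
  (\sum_(i | P i) w i * z i) ^+ 2 <= (\sum_(i | P i) w i) * (\sum_(i | P i) w i * z i ^+ 2).
Proof.
move=> Hw; have := cs_sum P (fun i => Num.sqrt (w i)) (fun i => Num.sqrt (w i) * z i).
have E1 : \sum_(i | P i) Num.sqrt (w i) * (Num.sqrt (w i) * z i) = \sum_(i | P i) w i * z i.
  by apply: eq_bigr => i _; rewrite mulrA -expr2 sqr_sqrtr.
have E2 : \sum_(i | P i) Num.sqrt (w i) ^+ 2 = \sum_(i | P i) w i.
  by apply: eq_bigr => i _; rewrite sqr_sqrtr.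
have E3 : \sum_(i | P i) (Num.sqrt (w i) * z i) ^+ 2 = \sum_(i | P i) w i * z i ^+ 2.
  by apply: eq_bigr => i _; rewrite exprMn sqr_sqrtr.
by rewrite E1 E2 E3.
Qed.

Lemma qfB p (A B : 'M[R]_p) x : qf (A - B) x = qf A x - qf B x.
Proof.
rewrite /qf -sumrB; apply: eq_bigr => i _; rewrite -sumrB.
by apply: eq_bigr => j _; rewrite !mxE; ring.
Qed.

Lemma qf_Smat N p (g : 'I_N -> 'cV[R]_p) w mu x :
  qf (Smat g w mu) x = \sum_n w n * dot x (g n - mu) ^+ 2.
Proof. by rewrite /Smat qf_sum; apply: eq_bigr => n _; rewrite qfZ qf_outer. Qed.

Lemma gamma_bound N p (g : 'I_N -> 'cV[R]_p) w mu x :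
  \sum_n w n * dot x (g n - mu) ^+ 2 <= gammaf g w mu * dot x x.
Proof. by rewrite -qf_Smat; exact: opnorm_quad. Qed.

Lemma dot_wsum N p (I : pred 'I_N) (x : 'cV[R]_p) (w : 'I_N -> R) (F : 'I_N -> 'cV[R]_p) :
  dot x (\sum_(n | I n) w n *: F n) = \sum_(n | I n) w n * dot x (F n).
Proof. by rewrite dot_sumr; apply: eq_bigr => n _; rewrite dotZr. Qed.

Lemma norm2_opp p (x : 'cV[R]_p) : norm2 (- x) = norm2 x.
Proof. by rewrite -scaleN1r norm2Z normrN normr1 mul1r. Qed.

End L4gen.


Section L5.
Variable R : realType.
Variables (N p : nat) (eps : R) (g : 'I_N -> 'cV[R]_p) (Iin : {set 'I_N})
  (mug : 'cV[R]_p) (Sigg : 'M[R]_p) (dmu dSig : R).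
Hypothesis HN : (1 <= N)%N.
Hypothesis Heps0 : 0 < eps.
Hypothesis Heps1 : eps < 1 / 3.
Hypothesis Hstab : inlier_stable eps g Iin mug Sigg dmu dSig.

Let Nr : R := N%:R.
Let kr : R := #|~: Iin|%:R.
Let mr : R := #|Iin|%:R.

Lemma Nr_pos : 0 < Nr.
Proof. by rewrite /Nr ltr0n. Qed.

Lemma mk : mr + kr = Nr.
Proof. by rewrite /mr /kr /Nr -natrD cardsC card_ord. Qed.

Lemma kr_le : kr <= eps * Nr.
Proof. by case: Hstab. Qed.

Lemma mr_ge : (1 - eps) * Nr <= mr.
Proof. have := mk; have := kr_le; lra. Qed.

Lemma mr_pos : 0 < mr.
Proof.
have e0 := Heps0; have e1 := Heps1. have := mr_ge; have : 0 < (1 - eps) * Nr by apply: mulr_gt0; [lra | exact: Nr_pos]. lra. Qed.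

Lemma sum_split (F : 'I_N -> R) :
  \sum_n F n = \sum_(n in Iin) F n + \sum_(n | n \notin Iin) F n.
Proof. by rewrite (bigID (fun n => n \in Iin)). Qed.

Lemma DeltaN_unpack w : DeltaN N eps w ->
  \sum_n w n = 1 /\ forall n, 0 <= w n /\ w n * ((1 - eps) * Nr) <= 1.
Proof.
have e0 := Heps0; have e1 := Heps1.
move=> [Hs Hb]; split.
  by rewrite -Hs; apply: eq_bigl => n; rewrite finset.in_setT.
move=> n; have [H0 H1] := Hb n (finset.in_setT n); split => //.
have c0 : 0 < (1 - eps) * Nr by apply: mulr_gt0; [lra | exact: Nr_pos].
by move: H1; rewrite cardsT card_ord -/Nr ler_pdivlMr.
Qed.

Lemma sum_out_le w : (forall n, w n * ((1 - eps) * Nr) <= 1) ->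
  (\sum_(n | n \notin Iin) w n) * ((1 - eps) * Nr) <= kr.
Proof.
move=> Hw; rewrite mulr_suml.
apply: le_trans (_ : \sum_(n | n \notin Iin) (1 : R) <= _).
  by apply: ler_sum => n _; exact: Hw.
rewrite (eq_bigl (fun n => n \in ~: Iin)); last by move=> n; rewrite finset.in_setC.
by rewrite sumr_const /kr.
Qed.

Theorem keyK w mu : DeltaN N eps w ->
  norm2 (wmean g w - mug) <= dmu + alpha_eps eps * Num.sqrt (gammaf g w mu).
Proof.
have e0 := Heps0; have e1 := Heps1.
move=> /DeltaN_unpack [Hs1 Hw].
have Hw0 : forall n, 0 <= w n by move=> n; case: (Hw n).
have Hw1 : forall n, w n * ((1 - eps) * Nr) <= 1 by move=> n; case: (Hw n).
have [Hk [Hpsd [Hdmu [HdSig Hst]]]] := Hstab.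
set gam := gammaf g w mu.
have gam0 : 0 <= gam by exact: opnorm_ge0.
set a := \sum_(n | n \notin Iin) w n.
set b := \sum_(n in Iin) w n.
have Hab : b + a = 1 by rewrite -Hs1 (sum_split w).
have a0 : 0 <= a by apply: sumr_ge0.
have Npos := Nr_pos.
have Ha : a * (1 - eps) <= eps.
  have := sum_out_le Hw1; rewrite -/a => H.
  have H2 := kr_le.
  have : (a * (1 - eps) - eps) * Nr <= 0 by nra.
  rewrite pmulr_lle0 //; lra.
have b0 : 0 < b by nra.
pose w' := fun n => w n / b.
have HD : DeltaI Iin (eps / (1 - eps)) w'.
  split.
    by rewrite /w' -mulr_suml -/b divff // gt_eqF.
  move=> n _; split; first by rewrite /w' divr_ge0 // ltW.
  have F1 := Hw1 n.
  have F2 : mr - eps * Nr <= b * ((1 - eps) * Nr).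
    have := sum_out_le Hw1; rewrite -/a; have := mk; nra.
  have F3 := mr_ge.
  have mpos := mr_pos.
  have E : 1 / ((1 - eps / (1 - eps)) * #|Iin|%:R) = (1 - eps) / ((1 - 2 * eps) * mr).
    rewrite /mr; field; apply/andP; split; [|apply/andP; split]; rewrite ?gt_eqF //; lra.
  rewrite E /w' ler_pdivrMr // mulrAC ler_pdivlMr; last by apply: mulr_gt0; lra.
  have G1 : w n * ((1 - eps) * Nr) * ((1 - 2 * eps) * mr) <= (1 - 2 * eps) * mr.
    by rewrite -[X in _ <= X]mul1r ler_wpM2r //; apply: mulr_ge0; lra.
  have G2 : (1 - 2 * eps) * mr <= (1 - eps) * (mr - eps * Nr) by nra.
  have G3 : (1 - eps) * (mr - eps * Nr) <= (1 - eps) * (b * ((1 - eps) * Nr)).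
    by rewrite ler_wpM2l //; lra.
  have c0 : 0 < (1 - eps) * Nr by apply: mulr_gt0; lra.
  rewrite -(ler_pM2r c0).
  have -> : w n * ((1 - 2 * eps) * mr) * ((1 - eps) * Nr)
          = w n * ((1 - eps) * Nr) * ((1 - 2 * eps) * mr) by ring.
  have -> : (1 - eps) * b * ((1 - eps) * Nr) = (1 - eps) * (b * ((1 - eps) * Nr)) by ring.
  by apply: le_trans G1 (le_trans G2 G3).
have [HY _] := Hst w' HD.
set Y := \sum_(n in Iin) w' n *: (g n - mug) in HY.
set W := wmean g w.
set D := W - mug.
set DD := dot D D.
have DD0 : 0 <= DD by exact: dot_ge0.
have nD0 : 0 <= norm2 D by exact: norm2_ge0.
have HDY : dot D Y <= norm2 D * dmu.
  apply: le_trans (ler_norm _) _; apply: le_trans (cs_norm _ _) _.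
  by rewrite ler_wpM2l.
have HbY : b * dot D Y = \sum_(n in Iin) w n * dot D (g n - mug).
  rewrite /Y dot_wsum mulr_sumr; apply: eq_bigr => n _; rewrite /w'.
  by rewrite mulrA mulrCA divff ?mulr1 // gt_eqF.
set q := DD - dot D Y.
pose z := fun n => dot D (g n - W).
have Hz : forall n, z n = dot D (g n - mug) - DD.
  move=> n; rewrite /z /DD -dotBr; congr dot.
  by rewrite /D opprB addrA subrK.
have HWdot : dot D W = \sum_n w n * dot D (g n).
  by rewrite /W /wmean dot_wsum.
have Hz0 : \sum_n w n * z n = 0.
  rewrite /z; under eq_bigr => n _ do rewrite dotBr mulrBr.
  by rewrite sumrB -mulr_suml Hs1 mul1r -HWdot subrr.
have Hin : \sum_(n in Iin) w n * z n = - (b * q).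
  under eq_bigr => n _ do rewrite Hz mulrBr.
  by rewrite sumrB -mulr_suml -/b -HbY /q; ring.
have Hout : \sum_(n | n \notin Iin) w n * z n = b * q.
  by move: Hz0; rewrite sum_split Hin; lra.
have CSin := wcs (fun n => n \in Iin) z Hw0.
have CSout := wcs (fun n => n \notin Iin) z Hw0.
rewrite Hin -/b in CSin; rewrite Hout -/a in CSout.
set Sin := \sum_(n in Iin) w n * z n ^+ 2 in CSin.
set Sout := \sum_(n | n \notin Iin) w n * z n ^+ 2 in CSout.
have Hvar : Sin + Sout <= gam * DD.
  pose cc := dot D (W - mu).
  have Ht : forall n, dot D (g n - mu) = z n + cc.
    move=> n; rewrite /z /cc -dotDr; congr dot.
    by rewrite addrA subrK.
  have := gamma_bound g w mu D; rewrite -/gam -/DD.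
  under eq_bigr => n _ do rewrite Ht.
  have -> : \sum_n w n * (z n + cc) ^+ 2
      = \sum_n w n * z n ^+ 2 + 2 * cc * (\sum_n w n * z n) + cc ^+ 2 * (\sum_n w n).
    have E : forall n, w n * (z n + cc) ^+ 2
        = w n * z n ^+ 2 + 2 * cc * (w n * z n) + cc ^+ 2 * w n by move=> n; ring.
    by rewrite (eq_bigr _ (fun n _ => E n)) !big_split /= -!mulr_sumr.
  rewrite Hz0 Hs1 sum_split -/Sin -/Sout.
  have := sqr_ge0 cc; lra.
have Sin0 : 0 <= Sin by apply: sumr_ge0 => n _; apply: mulr_ge0 => //; exact: sqr_ge0.
have Sout0 : 0 <= Sout by apply: sumr_ge0 => n _; apply: mulr_ge0 => //; exact: sqr_ge0.
have Hq1 : b * q ^+ 2 <= Sin.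
  have : b * (b * q ^+ 2) <= b * Sin by move: CSin; rewrite sqrrN; nra.
  by rewrite ler_pM2l.
have Hq2 : b * q ^+ 2 <= a * (gam * DD).
  have H3 : b * b * q ^+ 2 <= a * Sout by move: CSout; rewrite exprMn expr2; nra.
  have H4 : a * (b * q ^+ 2) <= a * Sin by rewrite ler_wpM2l.
  have H5 : a * (Sin + Sout) <= a * (gam * DD) by rewrite ler_wpM2l.
  have -> : b * q ^+ 2 = b * b * q ^+ 2 + a * (b * q ^+ 2).
    have -> : a = 1 - b by lra.
    ring.
  lra.
have Hq3 : q ^+ 2 * (1 - 2 * eps) <= eps * (gam * DD).
  have gD0 : 0 <= gam * DD by apply: mulr_ge0.
  have : b * (q ^+ 2 * (1 - 2 * eps)) <= b * (eps * (gam * DD)).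
    have H6 : a * (1 - 2 * eps) <= eps * b by nra.
    have H7 : b * q ^+ 2 * (1 - 2 * eps) <= a * (gam * DD) * (1 - 2 * eps).
      by rewrite ler_wpM2r //; lra.
    have H8 : a * (gam * DD) * (1 - 2 * eps) <= eps * b * (gam * DD).
      by rewrite mulrAC ler_wpM2r.
    have -> : b * (q ^+ 2 * (1 - 2 * eps)) = b * q ^+ 2 * (1 - 2 * eps) by ring.
    have -> : b * (eps * (gam * DD)) = eps * b * (gam * DD) by ring.
    exact: le_trans H7 H8.
  by rewrite ler_pM2l.
set al := alpha_eps eps.
have al0 : 0 <= al by exact: sqrtr_ge0.
have al2 : al ^+ 2 = eps / (1 - 2 * eps) by rewrite /al /alpha_eps sqr_sqrtr // divr_ge0 //; lra.
have Hq4 : q ^+ 2 <= al ^+ 2 * (gam * DD).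
  rewrite al2 mulrAC ler_pdivlMr; last by lra.
  by [].
clearbody al.
have Hq5 : q <= al * Num.sqrt gam * norm2 D.
  have R1 : `|q| = Num.sqrt (q ^+ 2) by rewrite sqrtr_sqr.
  have R2 : al * Num.sqrt gam * norm2 D = Num.sqrt (al ^+ 2 * (gam * DD)).
    by rewrite sqrtrM ?sqr_ge0 // sqrtr_sqr ger0_norm // sqrtrM // norm2_dot -/DD mulrA.
  by apply: le_trans (ler_norm q) _; rewrite R1 R2 ler_wsqrtr.
have Hfin : norm2 D ^+ 2 <= norm2 D * (dmu + al * Num.sqrt gam).
  rewrite norm2_sq -/DD.
  have -> : DD = dot D Y + q by rewrite /q; ring.
  have : dot D Y + q <= norm2 D * dmu + al * Num.sqrt gam * norm2 D by lra.
  by move=> H; apply: le_trans H _; rewrite mulrDr [al * _ * _]mulrC.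
have [nz|nnz] := eqVneq (norm2 D) 0.
  rewrite nz; apply: addr_ge0 => //; apply: mulr_ge0 => //; exact: sqrtr_ge0.
have npos : 0 < norm2 D by rewrite lt_def nnz nD0.
by move: Hfin; rewrite expr2 ler_pM2l.
Qed.

End L5.

Local Open Scope classical_set_scope.

Section L6.
Variable R : realType.
Variables (N p : nat) (eps : R) (g : 'I_N -> 'cV[R]_p) (Iin : {set 'I_N})
  (mug : 'cV[R]_p) (Sigg : 'M[R]_p) (dmu dSig : R).
Hypothesis HN : (1 <= N)%N.
Hypothesis Hp : (0 < p)%N.
Hypothesis Heps0 : 0 < eps.
Hypothesis Heps1 : eps < 1 / 3.
Hypothesis Hstab : inlier_stable eps g Iin mug Sigg dmu dSig.

Lemma mxtraceB' (A B : 'M[R]_p) : \tr (A - B) = \tr A - \tr B.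
Proof. by rewrite /mxtrace -sumrB; apply: eq_bigr => i _; rewrite !mxE. Qed.

Lemma density_ne' w mu : [set \tr (Smat g w mu *m rho) | rho in density p] !=set0.
Proof.
exists (\tr (Smat g w mu *m (p%:R^-1)%:M)).
exists ((p%:R)^-1)%:M; last by [].
split; [split|].
- exact: tr_scalar_mx.
- by move=> x; rewrite qfE qf_scalar; apply: mulr_ge0; [rewrite invr_ge0 ler0n | exact: dot_ge0].
- by rewrite mxtrace_scalar -(mulr_natr (p%:R)^-1) mulVf // pnatr_eq0 -lt0n.
Qed.

Theorem OPTB mu : OPT eps g mu <= opnorm Sigg + dSig + (dmu + norm2 (mu - mug)) ^+ 2.
Proof.
have e0 := Heps0; have e1 := Heps1.
have [Hk [Hpsd [Hdmu [HdSig Hst]]]] := Hstab.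
set e := norm2 (mu - mug).
set B := opnorm Sigg + dSig + (dmu + e) ^+ 2.
have op0 := opnorm_ge0 Sigg.
have ee0 : 0 <= e by exact: norm2_ge0.
have B0 : 0 <= B by rewrite /B; have := sqr_ge0 (dmu + e); lra.
set mr : R := #|Iin|%:R.
have mpos : 0 < mr by exact: mr_pos Heps0 Heps1 Hstab.
have mge : (1 - eps) * N%:R <= mr by exact: mr_ge Hstab.
have Npos : 0 < (N%:R : R) by rewrite ltr0n.
pose ws := fun n : 'I_N => if n \in Iin then mr^-1 else 0.
have Hsplit : forall F : 'I_N -> R, \sum_n ws n * F n = \sum_(n in Iin) ws n * F n.
  move=> F.
  have Z : \sum_(n | n \notin Iin) ws n * F n = 0.
    by apply: big1 => n /negbTE Hn; rewrite /ws Hn mul0r.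
  by rewrite (sum_split Iin) Z addr0.
have HsumIn : \sum_(n in Iin) ws n = 1.
  rewrite (eq_bigr (fun _ => mr^-1)); last by move=> n Hn; rewrite /ws Hn.
  by rewrite sumr_const -mulr_natr mulVf // gt_eqF.
have Hsum : \sum_n ws n = 1.
  have H := Hsplit (fun _ => 1); simpl in H.
  have E1 : \sum_n ws n = \sum_n ws n * 1 by apply: eq_bigr => n _; rewrite mulr1.
  have E2 : \sum_(n in Iin) ws n = \sum_(n in Iin) ws n * 1.
    by apply: eq_bigr => n _; rewrite mulr1.
  by rewrite E1 H -E2.
have ws0 : forall n, 0 <= ws n.
  by move=> n; rewrite /ws; case: ifP => _ //; rewrite invr_ge0 ltW.
have HwsN : DeltaN N eps ws.
  split.
    by rewrite -Hsum; apply: eq_bigl => n; rewrite finset.in_setT.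
  move=> n _; split => //.
  have c0 : 0 < (1 - eps) * N%:R by apply: mulr_gt0; lra.
  rewrite cardsT card_ord ler_pdivlMr //.
  rewrite /ws; case: ifP => _; last by rewrite mul0r.
  by rewrite ler_pdivrMl // mulr1.
have HwsI : DeltaI Iin (eps / (1 - eps)) ws.
  split => // n Hn; split => //.
  have c0 : 0 < 1 - eps / (1 - eps).
    rewrite subr_gt0 ltr_pdivrMr; lra.
  have c1 : 1 - eps / (1 - eps) <= 1.
    rewrite lerBlDr lerDl divr_ge0 //; lra.
  rewrite /ws Hn -/mr ler_pdivlMr; last by apply: mulr_gt0.
  rewrite mulrCA mulVf ?gt_eqF // mulr1 //.
have [HY HL] := Hst ws HwsI.
have Hq : forall x, qf (Smat g ws mu) x <= B * dot x x.
  move=> x; rewrite qf_Smat Hsplit.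
  set X := dot x x.
  have X0 : 0 <= X by exact: dot_ge0.
  set c := dot x (mu - mug).
  have Ha : forall n, dot x (g n - mu) = dot x (g n - mug) - c.
    move=> n; rewrite /c -dotBr; congr dot.
    by rewrite opprB addrA subrK.
  under eq_bigr => n _ do rewrite Ha.
  have -> : \sum_(n in Iin) ws n * (dot x (g n - mug) - c) ^+ 2
      = \sum_(n in Iin) ws n * dot x (g n - mug) ^+ 2
        - 2 * c * (\sum_(n in Iin) ws n * dot x (g n - mug))
        + c ^+ 2 * (\sum_(n in Iin) ws n).
    have E : forall n, ws n * (dot x (g n - mug) - c) ^+ 2
        = ws n * dot x (g n - mug) ^+ 2 + (- (2 * c)) * (ws n * dot x (g n - mug))
          + c ^+ 2 * ws n by move=> n; ring.
    rewrite (eq_bigr _ (fun n _ => E n)) !big_split /= -!mulr_sumr; ring.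
  rewrite HsumIn mulr1.
  have H1 : \sum_(n in Iin) ws n * dot x (g n - mug) ^+ 2 <= (opnorm Sigg + dSig) * X.
    have -> : \sum_(n in Iin) ws n * dot x (g n - mug) ^+ 2
        = qf (\sum_(n in Iin) ws n *: ((g n - mug) *m (g n - mug)^T)) x.
      by rewrite qf_sum; apply: eq_bigr => n _; rewrite qfZ qf_outer.
    apply: le_trans (_ : qf (Sigg + dSig%:M) x <= _).
      by rewrite -!qfE; exact: HL.
    rewrite qfD qf_scalar mulrDl -/X lerD2r; exact: opnorm_quad.
  have H2 : `|\sum_(n in Iin) ws n * dot x (g n - mug)| <= norm2 x * dmu.
    rewrite -dot_wsum; apply: le_trans (cs_norm _ _) _.
    by rewrite ler_wpM2l //; exact: norm2_ge0.
  have H3 : `|c| <= norm2 x * e by exact: cs_norm.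
  have nx0 : 0 <= norm2 x by exact: norm2_ge0.
  have HX : X = norm2 x ^+ 2 by rewrite norm2_sq.
  set S1 := \sum_(n in Iin) ws n * dot x (g n - mug) in H2 *.
  have H4 : - (2 * c * S1) <= 2 * (norm2 x * e) * (norm2 x * dmu).
    have : `|c * S1| <= (norm2 x * e) * (norm2 x * dmu).
      by rewrite normrM; apply: ler_pM => //; exact: normr_ge0.
    move=> H; have := ler_norm (- (c * S1)); rewrite normrN => H'.
    have : - (c * S1) <= norm2 x * e * (norm2 x * dmu) by exact: le_trans H' H.
    lra.
  have H5 : c ^+ 2 <= (norm2 x * e) ^+ 2.
    rewrite -sqr_normr !expr2; apply: ler_pM => //; exact: normr_ge0.
  have H6 : (opnorm Sigg + dSig) * X + 2 * (norm2 x * e) * (norm2 x * dmu)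
            + (norm2 x * e) ^+ 2 <= B * X.
    rewrite /B HX; have := mulr_ge0 (sqr_ge0 (norm2 x)) (sqr_ge0 dmu).
    move=> H7; set u := norm2 x in H7 *; nra.
  lra.
have Htr : forall rho, density p rho -> \tr (Smat g ws mu *m rho) <= B.
  move=> rho [Hrho Htr1].
  have := @trace_psd R p (B%:M - Smat g ws mu) rho _ Hrho.
  rewrite mulmxBl mul_scalar_mx mxtraceB' mxtraceZ Htr1 mulr1 subr_ge0; apply.
  by move=> x; rewrite qfB qf_scalar subr_ge0.
have Hsup : sup [set \tr (Smat g ws mu *m rho) | rho in density p] <= B.
  apply: ge_sup; first exact: density_ne'.
  by move=> y [rho Hrho <-]; exact: Htr.
rewrite /OPT.
set F := [set sup _ | w in _].
case: (pselect (has_lbound F)) => Hlb.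
  apply: le_trans Hsup; apply: (ge_inf Hlb); exists ws => //.
rewrite inf_out //; by move=> [_ ?].
Qed.

End L6.

End Helpers.
Import Helpers.

Lemma sqrt_add_sq (R : realType) (A b : R) : 0 <= A -> 0 <= b ->
  Num.sqrt (A + b ^+ 2) <= Num.sqrt A + b.
Proof.
move=> A0 b0; have s0 := sqrtr_ge0 A.
rewrite -[X in _ <= X]ger0_norm ?addr_ge0 // -sqrtr_sqr ler_wsqrtr //.
rewrite sqrrD sqr_sqrtr //; have := mulr_ge0 s0 b0; lra.
Qed.

Lemma h1 s n : (1 <= s <= n)%N -> (1 <= s <= n.+1)%N. Proof. lia. Qed.
Lemma h2 n : (1 <= n.+1 <= n.+1)%N. Proof. lia. Qed.
Lemma h3 r n : (n.+1 < r)%N -> (r < n.+2)%N -> False. Proof. lia. Qed.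
Lemma h4 s m : (1 <= s <= m)%N -> (1 <= s)%N. Proof. lia. Qed.
Lemma h5 s m : (1 <= s <= m)%N -> (s <= m)%N. Proof. lia. Qed.

Lemma pre_ext (P : nat -> Prop) n : (forall r, (1 <= r < n.+1)%N -> P r) -> P n.+1 ->
  forall r, (1 <= r < n.+2)%N -> P r.
Proof.
move=> H1 H2 r /andP [r1 r2]; case: (ltngtP r n.+1) => Hr.
- by apply: H1; rewrite r1 Hr.
- by rewrite ltnS leqNgt Hr in r2.
- by rewrite Hr.
Qed.

Theorem mainTheorem12 (R : realType) (N p : nat) (eps : R)
  (g : 'I_N -> 'cV[R]_p) (T : nat)
  (Iin : {set 'I_N}) (mug : 'cV[R]_p) (Sigg : 'M[R]_p) (dmu dSig : R)
  (muhat : nat -> 'cV[R]_p) (wbar : nat -> 'I_N -> R) (Rk Cstop : R) :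
  (1 <= N)%N -> (2 <= p)%N -> 0 < eps -> eps < 1 / 3 ->
  0 < nu g ->
  4 * Num.max (ln (1 / (1 - eps))) (ln (p%:R : R)) <= T%:R ->
  inlier_stable eps g Iin mug Sigg dmu dSig ->
  in_conv g (muhat 1%N) ->
  (* iteration s is reached iff no earlier iteration r (1 <= r < s) stopped *)
  (forall s : nat, (1 <= s)%N ->
     (forall r : nat, (1 <= r < s)%N -> Cstop < gammaf g (wbar r) (muhat r)) ->
     DeltaN N eps (wbar s) /\
     gammaf g (wbar s) (muhat s) <= OPT eps g (muhat s) + deltaT g eps T) ->
  (forall s : nat, (1 <= s)%N ->
     (forall r : nat, (1 <= r < s)%N -> Cstop < gammaf g (wbar r) (muhat r)) ->
     Cstop < gammaf g (wbar s) (muhat s) ->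
     muhat s.+1 = wmean g (wbar s)) ->
  R_inf eps dmu (opnorm Sigg) dSig (deltaT g eps T) < Rk ->
  opnorm Sigg + dSig + (dmu + Rk) ^+ 2 + deltaT g eps T <= Cstop ->
  (* (1a) *)
  (forall s : nat, (1 <= s)%N ->
     (forall r : nat, (1 <= r < s)%N -> Cstop < gammaf g (wbar r) (muhat r)) ->
     norm2 (muhat s - mug) <= Rk -> gammaf g (wbar s) (muhat s) <= Cstop) /\
  (* (1b): the procedure stops at some iteration s <= s_max *)
  (exists s : nat, (1 <= s)%N /\
     (s%:Z <= s_max eps (norm2 (muhat 1%N - mug))
                (R_inf eps dmu (opnorm Sigg) dSig (deltaT g eps T)) Rk)%R /\
     (forall r : nat, (1 <= r < s)%N -> Cstop < gammaf g (wbar r) (muhat r)) /\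
     gammaf g (wbar s) (muhat s) <= Cstop) /\
  (* (2) *)
  (forall s : nat, (1 <= s)%N ->
     (forall r : nat, (1 <= r < s)%N -> Cstop < gammaf g (wbar r) (muhat r)) ->
     gammaf g (wbar s) (muhat s) <= Cstop ->
     norm2 (wmean g (wbar s) - mug) <= dmu + alpha_eps eps * Num.sqrt Cstop).
Proof.
move=> HN Hp2 He0 He1 Hnu HT Hstab Hconv Hopt Hupd HRk HC.
have Hp : (0 < p)%N by apply: leq_trans Hp2.
have dmu0 : 0 <= dmu by case: Hstab => _ [_ [? _]].
have dSig0 : 0 <= dSig by case: Hstab => _ [_ [_ [? _]]].
have op0 := opnorm_ge0 Sigg.
set dT := deltaT g eps T in HRk HC Hopt *.
have dT0 : 0 <= dT.
  rewrite /dT /deltaT; apply: mulr_ge0; first by apply: mulr_ge0 => //; exact: ltW.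
  by apply: addr_ge0; exact: sqrtr_ge0.
have al0 : 0 < alpha_eps eps.
  by rewrite /alpha_eps sqrtr_gt0 divr_gt0 //; lra.
have al1 : alpha_eps eps < 1.
  by rewrite /alpha_eps -[X in _ < X]sqrtr1 ltr_sqrt // ltr_pdivrMr; lra.
set al := alpha_eps eps in al0 al1 *.
pose RT := (1 + al) * dmu + al * Num.sqrt (opnorm Sigg + dSig + dT).
have HRI : R_inf eps dmu (opnorm Sigg) dSig dT = RT / (1 - al) by [].
rewrite HRI in HRk *.
set Rinf := RT / (1 - al) in HRk *.
have HRinf : al * Rinf + RT = Rinf.
  by rewrite /Rinf; field; rewrite subr_eq0 eq_sym lt_eqF.
pose pre := fun s => forall r, (1 <= r < s)%N -> Cstop < gammaf g (wbar r) (muhat r).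
pose e := fun s => norm2 (muhat s - mug).
have e0 : forall s, 0 <= e s by move=> s; exact: norm2_ge0.
have Hgam : forall s, (1 <= s)%N -> pre s ->
    gammaf g (wbar s) (muhat s) <= opnorm Sigg + dSig + (dmu + e s) ^+ 2 + dT.
  move=> s s1 Hpre; have [HD Hg] := Hopt s s1 Hpre.
  by apply: le_trans Hg _; rewrite lerD2r; exact: (OPTB HN Hp He0 He1 Hstab).
have P1 : forall s, (1 <= s)%N -> pre s -> e s <= Rk ->
    gammaf g (wbar s) (muhat s) <= Cstop.
  move=> s s1 Hpre HeR; apply: le_trans (Hgam s s1 Hpre) _; apply: le_trans HC.
  rewrite lerD2r lerD2l !expr2; apply: ler_pM; rewrite ?addr_ge0 //; lra.
have P2 : forall s, (1 <= s)%N -> pre s -> gammaf g (wbar s) (muhat s) <= Cstop ->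
    norm2 (wmean g (wbar s) - mug) <= dmu + al * Num.sqrt Cstop.
  move=> s s1 Hpre Hst; have [HD _] := Hopt s s1 Hpre.
  apply: le_trans (keyK HN He0 He1 Hstab (muhat s) HD) _.
  by rewrite lerD2l; apply: ler_wpM2l; [exact: ltW | exact: ler_wsqrtr].
have Hrec : forall s, (1 <= s)%N -> pre s -> Cstop < gammaf g (wbar s) (muhat s) ->
    e s.+1 <= al * e s + RT.
  move=> s s1 Hpre Hns; have [HD _] := Hopt s s1 Hpre.
  rewrite /e (Hupd s s1 Hpre Hns).
  apply: le_trans (keyK HN He0 He1 Hstab (muhat s) HD) _.
  have HA : 0 <= opnorm Sigg + dSig + dT by lra.
  have Hg := Hgam s s1 Hpre.
  have Hs : Num.sqrt (gammaf g (wbar s) (muhat s))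
            <= Num.sqrt (opnorm Sigg + dSig + dT) + (dmu + e s).
    apply: le_trans (_ : Num.sqrt (opnorm Sigg + dSig + dT + (dmu + e s) ^+ 2) <= _).
      by rewrite ler_wsqrtr //; lra.
    by apply: sqrt_add_sq => //; rewrite addr_ge0.
  have := ler_wpM2l (ltW al0) Hs; rewrite !mulrDr /RT -/al.
  rewrite /e in Hs *; lra.
pose M := Num.max (e 1%N - Rinf) 0.
have M0 : 0 <= M by rewrite /M le_max lexx orbT.
have D : forall n, (exists s, [/\ (1 <= s <= n)%N, pre s & gammaf g (wbar s) (muhat s) <= Cstop])
           \/ (pre n.+1 /\ e n.+1 <= Rinf + al ^+ n * M).
  elim => [|n [[s [Hs Hpre Hst]]|[Hpre He]]].
  - right; split; first by move=> r /andP [H1 H2]; rewrite ltnNge H1 in H2.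
    rewrite expr0 mul1r /M; have := le_max (e 1%N - Rinf) (e 1%N - Rinf) 0.
    rewrite lexx /= => /esym H; lra.
  - by left; exists s; split => //; apply: h1.
  - have [Hst|Hst] := boolP (gammaf g (wbar n.+1) (muhat n.+1) <= Cstop).
      by left; exists n.+1; split => //; apply: h2.
    rewrite -ltNge in Hst.
    right; split; first exact: (@pre_ext (fun r => Cstop < gammaf g (wbar r) (muhat r)) n Hpre Hst).
    apply: le_trans (Hrec n.+1 (ltn0Sn n) Hpre Hst) _.
    have := ler_wpM2l (ltW al0) He; rewrite exprS mulrDr; move: HRinf; lra.
have Hmain : forall n, al ^+ n * M <= Rk - Rinf ->
    exists s, [/\ (1 <= s <= n.+1)%N, pre s & gammaf g (wbar s) (muhat s) <= Cstop].
  move=> n Hn; case: (D n) => [[s [Hs Hpre Hst]]|[Hpre He]].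
    by exists s; split => //; apply: h1.
  exists n.+1; split => //; first by apply: h2.
  by apply: P1 => //; lra.
split; first by move=> s s1 Hpre; exact: P1.
split; last exact: P2.
rewrite /s_max; case: ifP => He1R.
  have [s [Hs Hpre Hst]] : exists s, [/\ (1 <= s <= 1)%N, pre s &
        gammaf g (wbar s) (muhat s) <= Cstop].
    apply: Hmain; rewrite expr0 mul1r.
    have -> : M = 0 by rewrite /M; apply/max_idPr; rewrite subr_le0.
    lra.
  exists s; split => //; first exact: h4 Hs.
  by split => //; rewrite lez_nat; exact: h5 Hs.
set X := ln ((norm2 (muhat 1%N - mug) - Rinf) / (Rk - Rinf)) / ln (1 / al).
set c := Num.max 0 (Num.ceil X).
have c0 : (0 <= c)%R by rewrite /c le_max lexx.
set k := `|c|%N.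
have kc : (k%:Z = c)%R by rewrite /k gez0_abs.
have Hge1 : Rinf < e 1%N by rewrite /e ltNge He1R.
have HM : M = e 1%N - Rinf by rewrite /M; apply/max_idPl; rewrite subr_ge0 ltW.
have Kpos : 0 < Rk - Rinf by rewrite subr_gt0.
have Mpos : 0 < e 1%N - Rinf by rewrite subr_gt0.
have lnal : ln (1 / al) = - ln al by rewrite div1r lnV // posrE.
have lnal0 : 0 < ln (1 / al).
  by apply: ln_gt0; rewrite ltr_pdivlMr // mul1r.
have HXk : X <= k%:R.
  apply: le_trans (ceil_ge X) _.
  have -> : (k%:R : R) = (k%:Z)%:~R by [].
  by rewrite kc ler_int /c le_max lexx orbT.
have HL : ln ((e 1%N - Rinf) / (Rk - Rinf)) <= k%:R * ln (1 / al).
  by rewrite -ler_pdivrMr.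
rewrite ln_div ?posrE // in HL.
have [s [Hs Hpre Hst]] : exists s, [/\ (1 <= s <= k.+1)%N, pre s &
      gammaf g (wbar s) (muhat s) <= Cstop].
  apply: Hmain; rewrite HM -ler_ln ?posrE //; last first.
    by apply: mulr_gt0 => //; exact: exprn_gt0.
  rewrite lnM ?posrE //; last exact: exprn_gt0.
  rewrite lnXn // -mulr_natl; move: HL; rewrite lnal; lra.
exists s; split => //; first exact: h4 Hs.
split => //.
have -> : (1 + c)%R = ((k.+1)%:Z)%R by rewrite -kc -add1n PoszD.
by rewrite lez_nat; exact: h5 Hs.
Qed.
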